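(* Let $\alpha,\beta$ be parameters, $q$ an indeterminate, $E_{n,k}(\alpha,\beta,q)$ the numbers defined in the context, and $E_n(x;q)=\sum_{k=0}^nE_{n,k}(\alpha,\beta,q)x^k$. Then: (i) for $n\ge1$, $E_{n}(x;q)=\bigl([\beta]+q^\beta[n-1+\alpha]x\bigr)E_{n-1}(x;q)+(1-x)xq^{\beta}\delta_{x}(E_{n-1}(x;q))$; (ii) for $n\ge0$, $\dfrac{E_{n}(x;q)}{(x;q)_{n+\alpha+\beta}}=\sum_{j\ge 0}x^j\begin{bmatrix}j+\alpha+\beta-1\\ j\end{bmatrix}[j+\beta]^n$; (iii) $\displaystyle\sum_{n\ge 0}\frac{E_{n}(x;q)}{(x;q)_{n+\alpha+\beta}}\frac{t^n}{n!}=\sum_{j\ge 0}x^j\begin{bmatrix}j+\alpha+\beta-1\\ j\end{bmatrix}\exp([j+\beta]t)$; (iv) for $n,j\ge0$, $\displaystyle\sum_{k=0}^{j}\begin{bmatrix}j-k+n+\alpha+\beta-1\\ j-k\end{bmatrix}E_{n,k}(\alpha,\beta,q)=\begin{bmatrix}j+\alpha+\beta-1\\ j\end{bmatrix}[j+\beta]^n$; (v) for $n\ge k\ge0$, $\displaystyle E_{n,k}(\alpha,\beta,q)=\sum_{j=0}^{k}\begin{bmatrix}n+\alpha+\beta\\ k-j\end{bmatrix}\begin{bmatrix}j+\alpha+\beta-1\\ j\end{bmatrix}(-1)^{k-j}q^{\binom{k-j}{2}}[\beta+j]^{n}$.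
   Context: For a real $x$, $[x]=\frac{1-q^x}{1-q}$. The numbers $E_{n,k}(\alpha,\beta,q)$ are determined by $E_{0,0}=1$, $E_{n,k}=0$ if $k\notin\{0,\dots,n\}$, and for $n\ge1$: $E_{n,k}(\alpha,\beta,q)=q^{\beta+k-1}[n-k+\alpha]E_{n-1,k-1}(\alpha,\beta,q)+[k+\beta]E_{n-1,k}(\alpha,\beta,q)$. The $q$-derivative is $\delta_x p(x)=\frac{p(qx)-p(x)}{(q-1)x}$. $q$-Pochhammer: $(x;q)_\infty=\prod_{i\ge0}(1-xq^i)$ and for real $N$, $(x;q)_N=(x;q)_\infty/(xq^N;q)_\infty$ (so $(x;q)_0=1$, $(x;q)_n=\prod_{i=0}^{n-1}(1-xq^i)$ for integers $n\ge1$). For real $x$ and integer $n\ge0$, $\begin{bmatrix}x\\ n\end{bmatrix}=\frac{(q^{x-n+1};q)_n}{(q;q)_n}$. *)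

(* Defs.v *)
From Stdlib Require Import Reals Factorial.
From Coquelicot Require Import Coquelicot.
Open Scope R_scope.

Definition qnum (q x : R) : R := (1 - Rpower q x) / (1 - q).

(* E_{n,k}(alpha,beta,q); out-of-range values (k > n) are 0 by the recursion. *)
Fixpoint Enk (alpha beta q : R) (n k : nat) : R :=
  match n with
  | O => match k with O => 1 | S _ => 0 end
  | S m =>
      (match k with
       | O => 0
       | S k' => Rpower q (beta + INR k - 1)
                  * qnum q (INR n - INR k + alpha) * Enk alpha beta q m k'
       end)
      + qnum q (INR k + beta) * Enk alpha beta q m k
  end.

Definition En (alpha beta q : R) (n : nat) (x : R) : R :=
  sum_f_R0 (fun k => Enk alpha beta q n k * x ^ k) n.

Definition qderiv (q : R) (p : R -> R) (x : R) : R :=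
  (p (q * x) - p x) / ((q - 1) * x).

Fixpoint qpoch_fin (a q : R) (n : nat) : R :=
  match n with
  | O => 1
  | S m => qpoch_fin a q m * (1 - a * q ^ m)
  end.

Definition qpoch_inf (a q : R) : R := real (Lim_seq (fun m => qpoch_fin a q m)).

Definition qpochR (a q N : R) : R := qpoch_inf a q / qpoch_inf (a * Rpower q N) q.

Definition qbinom (q x : R) (n : nat) : R :=
  qpoch_fin (Rpower q (x - INR n + 1)) q n / qpoch_fin q q n.

(* Main.v *)
Require Import Defs.
From Stdlib Require Import Reals Factorial.
From Coquelicot Require Import Coquelicot.
Open Scope R_scope.
From Stdlib Require Import Lra Lia.


Definition conv (f g : nat -> R) (m : nat) : R :=
  sum_f_R0 (fun i => f i * g (m - i)%nat) m.
Definition sh (f : nat -> R) (m : nat) : R :=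
  match m with O => 0 | S m' => f m' end.
Definition delta (m : nat) : R := match m with O => 1 | S _ => 0 end.

Lemma conv_ext f f' g g' m :
  (forall i, f i = f' i) -> (forall i, g i = g' i) -> conv f g m = conv f' g' m.
Proof.
  intros Hf Hg; unfold conv; apply sum_eq; intros i _; rewrite Hf, Hg; reflexivity.
Qed.

Lemma conv_plus_l f1 f2 g m :
  conv (fun i => f1 i + f2 i) g m = conv f1 g m + conv f2 g m.
Proof.
  unfold conv; rewrite <- plus_sum; apply sum_eq; intros; ring.
Qed.
Lemma conv_minus_l f1 f2 g m :
  conv (fun i => f1 i - f2 i) g m = conv f1 g m - conv f2 g m.
Proof.
  unfold conv; rewrite <- minus_sum; apply sum_eq; intros; ring.
Qed.
Lemma conv_scal_l c f g m :
  conv (fun i => c * f i) g m = c * conv f g m.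
Proof.
  unfold conv; rewrite scal_sum; apply sum_eq; intros; ring.
Qed.
Lemma conv_plus_r f g1 g2 m :
  conv f (fun i => g1 i + g2 i) m = conv f g1 m + conv f g2 m.
Proof.
  unfold conv; rewrite <- plus_sum; apply sum_eq; intros; ring.
Qed.
Lemma conv_minus_r f g1 g2 m :
  conv f (fun i => g1 i - g2 i) m = conv f g1 m - conv f g2 m.
Proof.
  unfold conv; rewrite <- minus_sum; apply sum_eq; intros; ring.
Qed.
Lemma conv_scal_r c f g m :
  conv f (fun i => c * g i) m = c * conv f g m.
Proof.
  unfold conv; rewrite scal_sum; apply sum_eq; intros; ring.
Qed.

Lemma conv_sh_r f g m : conv f (sh g) m = sh (conv f g) m.
Proof.
  unfold conv; destruct m as [|m].
  - simpl; ring.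
  - rewrite tech5, Nat.sub_diag. simpl sh at 2. simpl sh at 2. rewrite Rmult_0_r, Rplus_0_r.
    apply sum_eq; intros i Hi. replace (S m - i)%nat with (S (m - i)) by lia.
    reflexivity.
Qed.

Lemma conv_sh_l f g m : conv (sh f) g m = sh (conv f g) m.
Proof.
  unfold conv; destruct m as [|m]; simpl sh at 2.
  - simpl; ring.
  - rewrite decomp_sum by lia. simpl pred. simpl sh. rewrite Rmult_0_l, Rplus_0_l.
    apply sum_eq; intros i Hi. reflexivity.
Qed.

Lemma conv_delta_l g m : conv delta g m = g m.
Proof.
  unfold conv; destruct m as [|m].
  - simpl; ring.
  - rewrite decomp_sum by lia. simpl delta. rewrite Nat.sub_0_r.
    rewrite sum_eq with (Bn := fun _ => 0) by (intros; simpl; ring).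
    rewrite sum_cte. ring.
Qed.

Lemma conv_delta_r f m : conv f delta m = f m.
Proof.
  unfold conv; destruct m as [|m].
  - simpl; ring.
  - rewrite tech5, Nat.sub_diag. simpl delta at 2.
    rewrite sum_eq with (Bn := fun _ => 0).
    + rewrite sum_cte. ring.
    + intros i Hi. replace (S m - i)%nat with (S (m - i)) by lia. simpl; ring.
Qed.

Lemma conv_assoc_L a b c m : conv (conv a b) c m =
  a 0%nat * conv b c m + sh (conv (conv (fun k => a (S k)) b) c) m.
Proof.
  assert (Ha : forall i, a i = a 0%nat * delta i + sh (fun k => a (S k)) i).
  { intros [|i]; simpl; ring. }
  rewrite (conv_ext (conv a b) (fun i => a 0%nat * conv delta b i + conv (sh (fun k => a (S k))) b i) c c).
  2:{ intros i. rewrite (conv_ext a (fun i => a 0%nat * delta i + sh (fun k => a (S k)) i) b b i Ha (fun _ => eq_refl)).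
      rewrite conv_plus_l, conv_scal_l. reflexivity. }
  2: reflexivity.
  rewrite conv_plus_l, conv_scal_l.
  rewrite (conv_ext (fun i => conv delta b i) b c c _ (conv_delta_l b) (fun _ => eq_refl)).
  rewrite (conv_ext (fun i => conv (sh (fun k => a (S k))) b i) (sh (conv (fun k => a (S k)) b)) c c _ (conv_sh_l _ b) (fun _ => eq_refl)).
  rewrite conv_sh_l. reflexivity.
Qed.

Lemma conv_assoc_R a g m : conv a g m =
  a 0%nat * g m + sh (conv (fun k => a (S k)) g) m.
Proof.
  assert (Ha : forall i, a i = a 0%nat * delta i + sh (fun k => a (S k)) i).
  { intros [|i]; simpl; ring. }
  rewrite (conv_ext a (fun i => a 0%nat * delta i + sh (fun k => a (S k)) i) g g _ Ha (fun _ => eq_refl)).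
  rewrite conv_plus_l, conv_scal_l, conv_delta_l, conv_sh_l. reflexivity.
Qed.

Lemma conv_assoc a b c m : conv (conv a b) c m = conv a (conv b c) m.
Proof.
  revert a; induction m as [|m IH]; intros a;
    rewrite conv_assoc_L, (conv_assoc_R a (conv b c)); simpl sh; try reflexivity.
  rewrite IH. reflexivity.
Qed.
Lemma qn_ne (q : R) (hq0 : 0 < q) (hq1 : q <> 1) (i : nat) : q ^ (S i) <> 1.
Proof.
  destruct (Rlt_or_le q 1) as [H|H].
  - pose proof (pow_lt_1_compat q (S i) (conj (Rlt_le _ _ hq0) H) ltac:(lia)). lra.
  - assert (1 < q) by lra. pose proof (Rlt_pow_R1 q (S i) H0 ltac:(lia)). lra.
Qed.

Lemma qq_ne0 (q : R) (hq0 : 0 < q) (hq1 : q <> 1) (k : nat) : qpoch_fin q q k <> 0.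
Proof.
  induction k; simpl. lra.
  apply Rmult_integral_contrapositive; split; auto.
  pose proof (qn_ne q hq0 hq1 k). simpl in H. lra.
Qed.

Lemma qpoch_front a q k : qpoch_fin a q (S k) = (1 - a) * qpoch_fin (a * q) q k.
Proof.
  induction k. simpl; ring.
  change (qpoch_fin a q (S (S k))) with (qpoch_fin a q (S k) * (1 - a * q ^ (S k))).
  rewrite IHk. simpl. ring.
Qed.

Lemma qnum_plus (q : R) (hq1 : q <> 1) a b :
  qnum q (a + b) = qnum q a + Rpower q a * qnum q b.
Proof.
  unfold qnum; rewrite Rpower_plus. field. lra.
Qed.

Lemma qnum_0 (q : R) (hq0 : 0 < q) : qnum q 0 = 0.
Proof. unfold qnum; rewrite Rpower_O by auto. unfold Rdiv; ring. Qed.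

Lemma qnum_nat (q : R) (hq0 : 0 < q) (k : nat) : qnum q (INR k) = (1 - q ^ k) / (1 - q).
Proof. unfold qnum; rewrite Rpower_pow by auto; reflexivity. Qed.

Definition Cz (q z : R) (m : nat) : R := qpoch_fin z q m / qpoch_fin q q m.

Fixpoint Nq (q z : R) (m : nat) : R :=
  match m with O => 1 | S k => Nq q z k * (z - q ^ k) end.
Definition Pz (q z : R) (m : nat) : R := Nq q z m / qpoch_fin q q m.

Lemma qq_S q k : qpoch_fin q q (S k) = qpoch_fin q q k * (1 - q * q ^ k).
Proof. reflexivity. Qed.

Lemma C1 (q : R) (hq0 : 0 < q) (hq1 : q <> 1) z i :
  Cz q z i = Cz q (z * q) i - z * sh (Cz q (z * q)) i.
Proof.
  destruct i as [|k]; unfold Cz; simpl sh.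
  - simpl; field.
  - rewrite (qpoch_front z). rewrite !qq_S.
    change (qpoch_fin (z * q) q (S k)) with (qpoch_fin (z * q) q k * (1 - z * q * q ^ k)).
    pose proof (qq_ne0 q hq0 hq1 k). pose proof (qn_ne q hq0 hq1 k). simpl in H0.
    field. split; auto. lra.
Qed.

Lemma C2 (q : R) (hq0 : 0 < q) (hq1 : q <> 1) z i :
  qnum q (INR i) * Cz q z i = (1 - z) / (1 - q) * sh (Cz q (z * q)) i.
Proof.
  rewrite qnum_nat by auto.
  destruct i as [|k]; unfold Cz; simpl sh.
  - simpl; field. lra.
  - rewrite (qpoch_front z). rewrite !qq_S.
    pose proof (qq_ne0 q hq0 hq1 k). pose proof (qn_ne q hq0 hq1 k). simpl in H0.
    simpl pow. field. repeat split; auto; lra.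
Qed.

Lemma C3 (q : R) (hq0 : 0 < q) (hq1 : q <> 1) z i :
  q ^ i * Cz q z i = Cz q (z * q) i - sh (Cz q (z * q)) i.
Proof.
  destruct i as [|k]; unfold Cz; simpl sh.
  - simpl; field.
  - rewrite (qpoch_front z). rewrite !qq_S.
    change (qpoch_fin (z * q) q (S k)) with (qpoch_fin (z * q) q k * (1 - z * q * q ^ k)).
    pose proof (qq_ne0 q hq0 hq1 k). pose proof (qn_ne q hq0 hq1 k). simpl in H0.
    simpl pow. field. split; auto. lra.
Qed.

Lemma Nq_S q z k : Nq q (z * q) (S k) = Nq q z k * q ^ k * (z * q - 1).
Proof.
  induction k.
  - simpl; ring.
  - change (Nq q (z * q) (S (S k))) with (Nq q (z * q) (S k) * (z * q - q ^ (S k))).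
    rewrite IHk. simpl. ring.
Qed.

Lemma P1 (q : R) (hq0 : 0 < q) (hq1 : q <> 1) z i :
  Pz q (z * q) i = Pz q z i - z * sh (Pz q z) i.
Proof.
  destruct i as [|k]; unfold Pz; simpl sh.
  - simpl; field.
  - rewrite Nq_S. rewrite !qq_S. change (Nq q z (S k)) with (Nq q z k * (z - q ^ k)).
    pose proof (qq_ne0 q hq0 hq1 k). pose proof (qn_ne q hq0 hq1 k). simpl in H0.
    field. split; auto; lra.
Qed.


Lemma Rpower_minus q x y : Rpower q (x - y) = Rpower q x / Rpower q y.
Proof.
  unfold Rpower. replace (x * ln q) with ((x - y) * ln q + y * ln q) by ring.
  rewrite exp_plus. field. apply Rgt_not_eq, exp_pos.
Qed.

Lemma Rpower_pos q x : 0 < Rpower q x.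
Proof. unfold Rpower; apply exp_pos. Qed.

Lemma Erec (a b q : R) (hq0 : 0 < q) (hq1 : q <> 1) n k :
  Enk a b q (S n) k = qnum q b * Enk a b q n k
   + Rpower q b * qnum q (INR n + a) * sh (Enk a b q n) k
   + Rpower q b * (qnum q (INR k) * Enk a b q n k)
   - Rpower q b * sh (fun k => qnum q (INR k) * Enk a b q n k) k.
Proof.
  destruct k as [|k].
  - simpl Enk at 1. simpl sh. simpl INR. rewrite !Rplus_0_l, qnum_0 by auto. ring.
  - change (Enk a b q (S n) (S k)) with
      (Rpower q (b + INR (S k) - 1) * qnum q (INR (S n) - INR (S k) + a) * Enk a b q n k
       + qnum q (INR (S k) + b) * Enk a b q n (S k)).
    simpl sh.
    rewrite (Rplus_comm (INR (S k)) b), (qnum_plus q hq1 b (INR (S k))).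
    replace (b + INR (S k) - 1) with (b + INR k) by (rewrite S_INR; ring).
    replace (INR (S n) - INR (S k) + a) with ((INR n + a) - INR k) by (rewrite !S_INR; ring).
    rewrite Rpower_plus. unfold qnum. rewrite Rpower_minus.
    pose proof (Rpower_pos q (INR k)).
    field. split; lra.
Qed.

Lemma Leib (q : R) (hq0 : 0 < q) f g m :
  qnum q (INR m) * conv f g m =
  conv f (fun i => qnum q (INR i) * g i) m
  + conv (fun i => qnum q (INR i) * f i) (fun i => q ^ i * g i) m.
Proof.
  unfold conv; rewrite scal_sum, <- plus_sum; apply sum_eq; intros i Hi.
  rewrite !qnum_nat by auto.
  replace (q ^ m) with (q ^ (m - i) * q ^ i) by (rewrite <- pow_add; f_equal; lia).
  unfold Rdiv; ring.
Qed.

Definition Te (f : nat -> R) (q : R) := fun k => qnum q (INR k) * f k.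

Lemma step (a b q : R) (hq0 : 0 < q) (hq1 : q <> 1) n m :
  conv (Enk a b q (S n)) (Cz q (Rpower q (INR n + a + b) * q)) m =
  qnum q (INR m + b) * conv (Enk a b q n) (Cz q (Rpower q (INR n + a + b))) m.
Proof.
  set (z := Rpower q (INR n + a + b)).
  set (e := Enk a b q n).
  set (C' := Cz q (z * q)).
  set (X := conv e C' m). set (Y := conv (Te e q) C' m).
  set (sX := sh (conv e C') m). set (sY := sh (conv (Te e q) C') m).
  assert (H1 : conv e (Cz q z) m = X - z * sX).
  { rewrite (conv_ext e e (Cz q z) (fun i => C' i - z * sh C' i) m (fun _ => eq_refl) (C1 q hq0 hq1 z)).
    rewrite conv_minus_r, conv_scal_r, conv_sh_r. reflexivity. }
  assert (H2 : qnum q (INR m) * conv e (Cz q z) m = (1 - z) / (1 - q) * sX + Y - sY).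
  { rewrite Leib by auto.
    rewrite (conv_ext e e _ (fun i => (1 - z) / (1 - q) * sh C' i) m (fun _ => eq_refl) (C2 q hq0 hq1 z)).
    rewrite (conv_ext (fun i => qnum q (INR i) * e i) (Te e q) _ (fun i => C' i - sh C' i) m (fun _ => eq_refl) (C3 q hq0 hq1 z)).
    rewrite conv_scal_r, conv_sh_r, conv_minus_r, conv_sh_r. unfold sX, Y, sY. ring. }
  assert (H3 : conv (Enk a b q (S n)) C' m =
     qnum q b * X + Rpower q b * qnum q (INR n + a) * sX + Rpower q b * Y - Rpower q b * sY).
  { rewrite (conv_ext _ _ C' C' m (Erec a b q hq0 hq1 n) (fun _ => eq_refl)).
    rewrite conv_minus_l, !conv_plus_l, !conv_scal_l, !conv_sh_l. reflexivity. }
  rewrite H3. rewrite (Rplus_comm (INR m) b), (qnum_plus q hq1 b (INR m)).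
  rewrite Rmult_plus_distr_r, (Rmult_assoc (Rpower q b) (qnum q (INR m))), H2, H1.
  unfold z. replace (INR n + a + b) with ((INR n + a) + b) by ring.
  rewrite Rpower_plus. unfold qnum. field. lra.
Qed.

Lemma iv_core (a b q : R) (hq0 : 0 < q) (hq1 : q <> 1) n j :
  conv (Enk a b q n) (Cz q (Rpower q (INR n + a + b))) j =
  Cz q (Rpower q (a + b)) j * qnum q (INR j + b) ^ n.
Proof.
  revert j; induction n as [|n IH]; intros j.
  - rewrite (conv_ext (Enk a b q 0) delta _ (Cz q (Rpower q (a + b))) j).
    + rewrite conv_delta_l. simpl; ring.
    + intros [|i]; reflexivity.
    + intros; simpl INR; rewrite Rplus_0_l; reflexivity.
  - replace (Rpower q (INR (S n) + a + b)) with (Rpower q (INR n + a + b) * q).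
    + rewrite step by auto. rewrite IH. simpl. ring.
    + rewrite S_INR. replace (INR n + 1 + a + b) with ((INR n + a + b) + 1) by ring.
      rewrite (Rpower_plus (INR n + a + b) 1), Rpower_1 by auto. reflexivity.
Qed.

Lemma f_inv (q : R) (hq0 : 0 < q) (hq1 : q <> 1) z m :
  conv (Cz q (z * q)) (Pz q (z * q)) m = conv (Cz q z) (Pz q z) m.
Proof.
  rewrite (conv_ext _ _ (Pz q (z * q)) (fun i => Pz q z i - z * sh (Pz q z) i) m (fun _ => eq_refl) (P1 q hq0 hq1 z)).
  rewrite (conv_ext (Cz q z) (fun i => Cz q (z * q) i - z * sh (Cz q (z * q)) i) _ _ m (C1 q hq0 hq1 z) (fun _ => eq_refl)).
  rewrite conv_minus_r, conv_scal_r, conv_sh_r, conv_minus_l, conv_scal_l, conv_sh_l.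
  reflexivity.
Qed.

Lemma cont_sum (A : R -> nat -> R) :
  (forall i x, continuous (fun z => A z i) x) ->
  forall N x, continuous (fun z => sum_f_R0 (A z) N) x.
Proof.
  intros H N x; induction N; simpl.
  - apply H.
  - apply (continuous_plus (fun z => sum_f_R0 (A z) N) (fun z => A z (S N))); auto.
Qed.

Lemma cont_mult (f g : R -> R) x :
  continuous f x -> continuous g x -> continuous (fun z => f z * g z) x.
Proof. intros; apply (continuous_mult f g); auto. Qed.

Lemma cont_qpoch q m x : continuous (fun z => qpoch_fin z q m) x.
Proof.
  induction m; simpl.
  - apply continuous_const.
  - apply cont_mult; auto.
    apply (continuous_minus (fun _ => 1) (fun z => z * q ^ m)).
    + apply continuous_const.
    + apply cont_mult. apply continuous_id. apply continuous_const.
Qed.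

Lemma cont_Nq q m x : continuous (fun z => Nq q z m) x.
Proof.
  induction m; simpl.
  - apply continuous_const.
  - apply cont_mult; auto.
    apply (continuous_minus (fun z => z) (fun _ => q ^ m)).
    + apply continuous_id.
    + apply continuous_const.
Qed.

Lemma cont_f q m x : continuous (fun z => conv (Cz q z) (Pz q z) m) x.
Proof.
  unfold conv. apply (cont_sum (fun z i => Cz q z i * Pz q z (m - i)%nat)).
  intros i y. apply cont_mult; unfold Cz, Pz; apply cont_mult;
    try apply continuous_const. apply cont_qpoch. apply cont_Nq.
Qed.

Lemma const_lim (f : R -> R) r : 0 < r < 1 -> (forall w, f (r * w) = f w) ->
  continuous f 0 -> forall z, f z = f 0.
Proof.
  intros Hr Hf Hc z.
  assert (Hk : forall k, f (r ^ k * z) = f z).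
  { induction k. simpl; rewrite Rmult_1_l; auto. simpl. rewrite Rmult_assoc, Hf; auto. }
  assert (L : is_lim_seq (fun k => r ^ k * z) 0).
  { replace 0 with (0 * z) by ring. apply is_lim_seq_mult'.
    apply is_lim_seq_geom. rewrite Rabs_pos_eq; lra. apply is_lim_seq_const. }
  apply (is_lim_seq_continuous f) in L.
  2: apply continuity_pt_filterlim; exact Hc.
  apply (is_lim_seq_ext _ (fun _ => f z)) in L; auto.
  pose proof (is_lim_seq_unique _ _ L). rewrite Lim_seq_const in H.
  inversion H; auto.
Qed.

Lemma Nq1 q k : Nq q 1 (S k) = 0.
Proof. induction k; simpl in *. ring. rewrite IHk; ring. Qed.

Lemma CP_inv (q : R) (hq0 : 0 < q) (hq1 : q <> 1) z m :
  conv (Cz q z) (Pz q z) m = delta m.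
Proof.
  set (f := fun z => conv (Cz q z) (Pz q z) m).
  assert (Hr : exists r, 0 < r < 1 /\ forall w, f (r * w) = f w).
  { destruct (Rlt_or_le q 1) as [H|H].
    - exists q; split; [lra|]. intros w. unfold f. rewrite Rmult_comm. apply f_inv; auto.
    - exists (/ q); split.
      + split. apply Rinv_0_lt_compat; lra. rewrite <- Rinv_1. apply Rinv_lt_contravar; lra.
      + intros w. unfold f. rewrite <- (f_inv q hq0 hq1 (/ q * w)).
        replace (/ q * w * q) with w by (field; lra). reflexivity. }
  destruct Hr as [r [Hr Hf]].
  change (f z = delta m).
  rewrite (const_lim f r Hr Hf (cont_f q m 0) z).
  rewrite <- (const_lim f r Hr Hf (cont_f q m 0) 1).
  unfold f, conv. destruct m as [|m].
  - simpl. unfold Cz, Pz. simpl. field.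
  - rewrite sum_eq with (Bn := fun _ => 0).
    + rewrite sum_cte. simpl; ring.
    + intros i Hi. destruct i as [|i].
      * rewrite Nat.sub_0_r. unfold Pz. rewrite Nq1. unfold Rdiv; ring.
      * unfold Cz. rewrite qpoch_front. unfold Rdiv; ring.
Qed.

Definition ev (g : nat -> R) (N : nat) (x : R) : R := sum_f_R0 (fun k => g k * x ^ k) N.

Lemma ev_ext g g' N x : (forall i, g i = g' i) -> ev g N x = ev g' N x.
Proof. intros H; unfold ev; apply sum_eq; intros; rewrite H; auto. Qed.
Lemma ev_plus g1 g2 N x : ev (fun i => g1 i + g2 i) N x = ev g1 N x + ev g2 N x.
Proof. unfold ev; rewrite <- plus_sum; apply sum_eq; intros; ring. Qed.
Lemma ev_minus g1 g2 N x : ev (fun i => g1 i - g2 i) N x = ev g1 N x - ev g2 N x.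
Proof. unfold ev; rewrite <- minus_sum; apply sum_eq; intros; ring. Qed.
Lemma ev_scal c g N x : ev (fun i => c * g i) N x = c * ev g N x.
Proof. unfold ev; rewrite scal_sum; apply sum_eq; intros; ring. Qed.
Lemma ev_sh g N x : ev (sh g) (S N) x = x * ev g N x.
Proof.
  unfold ev; rewrite decomp_sum by lia. simpl pred. simpl sh at 1.
  rewrite scal_sum. rewrite Rmult_0_l, Rplus_0_l. apply sum_eq; intros; simpl; ring.
Qed.
Lemma ev_last0 g N x : g (S N) = 0 -> ev g (S N) x = ev g N x.
Proof. intros H; unfold ev; rewrite tech5, H; ring. Qed.

Lemma Enk_zero a b q n k : (n < k)%nat -> Enk a b q n k = 0.
Proof.
  revert k; induction n; intros k Hk.
  - destruct k; [lia|reflexivity].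
  - destruct k; [lia|]. simpl Enk. rewrite !IHn by lia. ring.
Qed.

Lemma ev_qdiff (q : R) (hq0 : 0 < q) (hq1 : q <> 1) g N x :
  ev g N (q * x) - ev g N x = (q - 1) * ev (Te g q) N x.
Proof.
  unfold ev, Te. rewrite <- minus_sum, scal_sum. apply sum_eq; intros i _.
  rewrite qnum_nat by auto. rewrite Rpow_mult_distr. field. lra.
Qed.

Lemma part_i (a b q : R) (hq0 : 0 < q) (hq1 : q <> 1) :
  forall (n : nat) (x : R), (1 <= n)%nat -> x <> 0 ->
     En a b q n x =
       (qnum q b + Rpower q b * qnum q (INR n - 1 + a) * x)
         * En a b q (n - 1) x
       + (1 - x) * x * Rpower q b * qderiv q (En a b q (n - 1)) x.
Proof.
  intros [|m] x Hn Hx; [lia|].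
  replace (S m - 1)%nat with m by lia.
  replace (INR (S m) - 1 + a) with (INR m + a) by (rewrite S_INR; ring).
  unfold qderiv.
  change (En a b q m) with (fun y => ev (Enk a b q m) m y).
  change (En a b q (S m) x) with (ev (Enk a b q (S m)) (S m) x).
  cbv beta.
  rewrite ev_qdiff by auto.
  rewrite (ev_ext _ _ (S m) x (Erec a b q hq0 hq1 m)).
  rewrite ev_minus, !ev_plus, !ev_scal, !ev_sh.
  rewrite (ev_last0 (Enk a b q m)) by (apply Enk_zero; lia).
  rewrite (ev_last0 (fun k => qnum q (INR k) * Enk a b q m k)) by (rewrite Enk_zero by lia; ring).
  change (fun k => qnum q (INR k) * Enk a b q m k) with (Te (Enk a b q m) q).
  field. split; auto. lra.
Qed.

Lemma part_iv (a b q : R) (hq0 : 0 < q) (hq1 : q <> 1) :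
  forall n j : nat,
     sum_f_R0 (fun k => qbinom q (INR j - INR k + INR n + a + b - 1) (j - k)
                        * Enk a b q n k) j
     = qbinom q (INR j + a + b - 1) j * qnum q (INR j + b) ^ n.
Proof.
  intros n j.
  transitivity (conv (Enk a b q n) (Cz q (Rpower q (INR n + a + b))) j).
  - unfold conv. apply sum_eq; intros k Hk. rewrite Rmult_comm. f_equal.
    unfold qbinom, Cz. f_equal. f_equal. f_equal. rewrite minus_INR by lia. ring.
  - rewrite iv_core by auto. unfold qbinom, Cz. do 4 f_equal. ring.
Qed.

Lemma Nq_alt (q : R) (hq0 : 0 < q) m z :
  (-1) ^ m * q ^ ((m * (m - 1)) / 2) * qpoch_fin (z / q ^ m * q) q m = Nq q z m.
Proof.
  revert z; induction m; intros z.
  - simpl; ring.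
  - rewrite qpoch_front.
    replace (z / q ^ S m * q * q) with (z / q ^ m * q) by (simpl; field; split; [apply pow_nonzero|]; lra).
    replace ((S m * (S m - 1)) / 2)%nat with ((m * (m - 1)) / 2 + m)%nat.
    + rewrite pow_add. simpl Nq. rewrite <- IHm.
      replace (z / q ^ S m * q) with (z / q ^ m) by (simpl; field; split; [apply pow_nonzero|]; lra).
      simpl pow at 1. set (t := q ^ (m * (m - 1) / 2)). set (u := (-1) ^ m). field. apply pow_nonzero; lra.
    + replace (S m * (S m - 1))%nat with (m * (m - 1) + m * 2)%nat by (destruct m; simpl; nia).
      rewrite Nat.div_add by lia. reflexivity.
Qed.

Lemma Pconv (q : R) (hq0 : 0 < q) (hq1 : q <> 1) M m :
  qbinom q M m * (-1) ^ m * q ^ ((m * (m - 1)) / 2) = Pz q (Rpower q M) m.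
Proof.
  unfold qbinom, Pz. rewrite <- Nq_alt by auto.
  replace (M - INR m + 1) with ((M - INR m) + 1) by ring.
  rewrite Rpower_plus, Rpower_minus, Rpower_pow, Rpower_1 by auto.
  pose proof (qq_ne0 q hq0 hq1 m). field; auto.
Qed.

Lemma part_v (a b q : R) (hq0 : 0 < q) (hq1 : q <> 1) :
  forall n k : nat, (k <= n)%nat ->
     Enk a b q n k =
     sum_f_R0 (fun j => qbinom q (INR n + a + b) (k - j)
                        * qbinom q (INR j + a + b - 1) j
                        * (-1) ^ (k - j) * q ^ (Nat.div ((k - j) * (k - j - 1)) 2)
                        * qnum q (b + INR j) ^ n) k.
Proof.
  intros n k _.
  set (z := Rpower q (INR n + a + b)).
  transitivity (conv (conv (Enk a b q n) (Cz q z)) (Pz q z) k).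
  - rewrite conv_assoc.
    rewrite (conv_ext _ _ (conv (Cz q z) (Pz q z)) delta k (fun _ => eq_refl) (CP_inv q hq0 hq1 z)).
    rewrite conv_delta_r. reflexivity.
  - unfold conv at 1. apply sum_eq; intros j Hj.
    unfold z. rewrite iv_core by auto.
    rewrite <- Pconv by auto.
    replace (qbinom q (INR j + a + b - 1) j) with (Cz q (Rpower q (a + b)) j)
      by (unfold qbinom, Cz; do 3 f_equal; ring).
    rewrite (Rplus_comm b (INR j)). ring.
Qed.


Lemma ser_iff a l : is_series a l <-> is_lim_seq (fun N => sum_f_R0 a N) l.
Proof.
  split; intros H.
  - apply (is_lim_seq_ext (sum_n a)); [intros; apply sum_n_Reals | exact H].
  - apply (is_lim_seq_ext _ (sum_n a)) in H; [exact H | intros; symmetry; apply sum_n_Reals].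
Qed.

Lemma exp_le_exp x y : x <= y -> exp x <= exp y.
Proof. intros [H|H]; [left; apply exp_increasing; auto | subst; lra]. Qed.

Lemma pow_le_1 q m : 0 <= q <= 1 -> q ^ m <= 1.
Proof. intros Hq; induction m; simpl; [lra|]. pose proof (pow_le q m (proj1 Hq)). nra. Qed.

Lemma qp_upper q y m : 0 < q < 1 ->
  Rabs (qpoch_fin y q m) <= exp (Rabs y * (1 - q ^ m) / (1 - q)).
Proof.
  intros Hq. induction m.
  - simpl. replace (Rabs y * (1 - 1) / (1 - q)) with 0 by (field; lra). rewrite exp_0, Rabs_R1; lra.
  - simpl qpoch_fin. rewrite Rabs_mult.
    replace (Rabs y * (1 - q ^ S m) / (1 - q)) with (Rabs y * (1 - q ^ m) / (1 - q) + Rabs y * q ^ m)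
      by (simpl; field; lra).
    rewrite exp_plus. apply Rmult_le_compat; try apply Rabs_pos; auto.
    pose proof (pow_lt q m (proj1 Hq)).
    eapply Rle_trans; [|apply exp_ineq1_le].
    unfold Rminus. eapply Rle_trans; [apply Rabs_triang|].
    rewrite Rabs_R1, Rabs_Ropp, Rabs_mult, (Rabs_pos_eq (q ^ m)); lra.
Qed.

Lemma qp_upper' q y m : 0 < q < 1 ->
  Rabs (qpoch_fin y q m) <= exp (Rabs y / (1 - q)).
Proof.
  intros Hq. eapply Rle_trans; [apply qp_upper; auto|].
  apply exp_le_exp. pose proof (pow_lt q m (proj1 Hq)). pose proof (Rabs_pos y).
  unfold Rdiv. apply Rmult_le_compat_r. left; apply Rinv_0_lt_compat; lra. nra.
Qed.

Lemma one_minus_ge s r : 0 <= s <= r -> r < 1 -> exp (- (s / (1 - r))) <= 1 - s.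
Proof.
  intros Hs Hr.
  set (v := s / (1 - s)).
  assert (Hv : 1 / (1 - s) <= exp v).
  { replace (1 / (1 - s)) with (1 + v) by (unfold v; field; lra). apply exp_ineq1_le. }
  assert (H1 : exp (- (s / (1 - r))) <= exp (- v)).
  { apply exp_le_exp. unfold v. apply Ropp_le_contravar. unfold Rdiv.
    apply Rmult_le_compat_l; [lra|]. apply Rinv_le_contravar; lra. }
  eapply Rle_trans; [exact H1|].
  rewrite exp_Ropp. replace (1 - s) with (/ (1 / (1 - s))) by (field; lra).
  apply Rinv_le_contravar; auto. apply Rdiv_lt_0_compat; lra.
Qed.

Lemma qp_lower q y m : 0 < q < 1 -> Rabs y < 1 ->
  exp (- (Rabs y * (1 - q ^ m) / ((1 - Rabs y) * (1 - q)))) <= Rabs (qpoch_fin y q m).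
Proof.
  intros Hq Hy. induction m.
  - simpl. replace (Rabs y * (1 - 1) / ((1 - Rabs y) * (1 - q))) with 0 by (field; lra).
    rewrite Ropp_0, exp_0, Rabs_R1; lra.
  - simpl qpoch_fin. rewrite Rabs_mult.
    replace (- (Rabs y * (1 - q ^ S m) / ((1 - Rabs y) * (1 - q)))) with
      (- (Rabs y * (1 - q ^ m) / ((1 - Rabs y) * (1 - q))) + - ((Rabs y * q ^ m) / (1 - Rabs y)))
      by (simpl; field; lra).
    rewrite exp_plus. apply Rmult_le_compat; try (left; apply exp_pos); auto.
    pose proof (pow_lt q m (proj1 Hq)).
    assert (q ^ m <= 1). { apply pow_le_1; lra. }  
    pose proof (Rabs_pos y).
    eapply Rle_trans. apply (one_minus_ge (Rabs y * q ^ m) (Rabs y)); [split; nra | lra].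
    assert (1 - Rabs y * q ^ m <= Rabs (1 - y * q ^ m)).
    { pose proof (Rabs_triang_inv 1 (y * q ^ m)). rewrite Rabs_R1, Rabs_mult, (Rabs_pos_eq (q ^ m)) in H2; lra. }
    lra.
Qed.

Lemma qp_cv q y : 0 < q < 1 ->
  is_lim_seq (fun m => qpoch_fin y q m) (qpoch_inf y q).
Proof.
  intros Hq.
  set (K := exp (Rabs y / (1 - q))).
  set (d := fun m => qpoch_fin y q (S m) - qpoch_fin y q m).
  assert (tele : forall N, qpoch_fin y q (S N) = 1 + sum_f_R0 d N).
  { induction N. unfold d; simpl; ring.
    rewrite tech5, <- Rplus_assoc, <- IHN. unfold d. ring. }
  assert (Hd : ex_series d).
  { apply (ex_series_le d (fun m => Rabs y * K * q ^ m)).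
    - intros m. change (norm (d m)) with (Rabs (d m)). unfold d. simpl qpoch_fin.
      replace (qpoch_fin y q m * (1 - y * q ^ m) - qpoch_fin y q m) with
        (- (qpoch_fin y q m * (y * q ^ m))) by ring.
      rewrite Rabs_Ropp, !Rabs_mult, (Rabs_pos_eq (q ^ m)) by (apply pow_le; lra).
      pose proof (qp_upper' q y m Hq). fold K in H.
      pose proof (Rabs_pos y). pose proof (pow_le q m (Rlt_le _ _ (proj1 Hq))).
      pose proof (Rabs_pos (qpoch_fin y q m)).
      assert (Rabs (qpoch_fin y q m) * (Rabs y * q ^ m) <= K * (Rabs y * q ^ m)).
      { apply Rmult_le_compat_r; auto. nra. }
      lra.
    - exists (Rabs y * K * / (1 - q)).
      apply (is_series_scal (Rabs y * K) (fun m => q ^ m)).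
      apply is_series_geom. rewrite Rabs_pos_eq; lra. }
  destruct Hd as [L HL]. apply ser_iff in HL.
  assert (H1 : is_lim_seq (fun m => qpoch_fin y q m) (1 + L)).
  { apply is_lim_seq_incr_1.
    apply (is_lim_seq_ext (fun N => 1 + sum_f_R0 d N)); [intros; symmetry; apply tele|].
    apply is_lim_seq_plus'; auto. apply is_lim_seq_const. }
  unfold qpoch_inf. rewrite (is_lim_seq_unique _ _ H1). simpl. exact H1.
Qed.

Lemma qp_nz q y : 0 < q < 1 -> Rabs y < 1 -> qpoch_inf y q <> 0.
Proof.
  intros Hq Hy.
  pose proof (qp_cv q y Hq) as H.
  apply is_lim_seq_abs in H.
  assert (Hb : forall m, exp (- (Rabs y / ((1 - Rabs y) * (1 - q)))) <= Rabs (qpoch_fin y q m)).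
  { intros m. eapply Rle_trans; [|apply qp_lower; auto].
    apply exp_le_exp. apply Ropp_le_contravar.
    pose proof (pow_lt q m (proj1 Hq)). pose proof (Rabs_pos y).
    unfold Rdiv. apply Rmult_le_compat_r.
    left; apply Rinv_0_lt_compat; apply Rmult_lt_0_compat; lra. nra. }
  pose proof (is_lim_seq_le _ _ _ _ Hb (is_lim_seq_const _) H) as H2.
  simpl in H2. pose proof (exp_pos (- (Rabs y / ((1 - Rabs y) * (1 - q))))).
  intros Hz. rewrite Hz, Rabs_R0 in H2. lra.
Qed.

Lemma qp_split_fin y q k m :
  qpoch_fin y q (m + k) = qpoch_fin y q k * qpoch_fin (y * q ^ k) q m.
Proof.
  induction m; simpl. ring. rewrite IHm. rewrite pow_add. ring.
Qed.

Lemma qp_split q y k : 0 < q < 1 ->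
  qpoch_inf y q = qpoch_fin y q k * qpoch_inf (y * q ^ k) q.
Proof.
  intros Hq.
  pose proof (qp_cv q y Hq) as H1.
  apply (is_lim_seq_incr_n _ k) in H1.
  pose proof (qp_cv q (y * q ^ k) Hq) as H2.
  apply (is_lim_seq_scal_l _ (qpoch_fin y q k)) in H2.
  apply (is_lim_seq_ext _ (fun m => qpoch_fin y q (m + k))) in H2.
  2: intros; symmetry; apply qp_split_fin.
  pose proof (is_lim_seq_unique _ _ H1). pose proof (is_lim_seq_unique _ _ H2).
  rewrite H in H0. simpl in H0. injection H0; auto.
Qed.

Lemma qp_fin_nz q y m : 0 < q < 1 -> Rabs y < 1 -> qpoch_fin y q m <> 0.
Proof.
  intros Hq Hy Hz. pose proof (qp_lower q y m Hq Hy). rewrite Hz, Rabs_R0 in H.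
  pose proof (exp_pos (- (Rabs y * (1 - q ^ m) / ((1 - Rabs y) * (1 - q))))). lra.
Qed.

Lemma Cz_bound q z : 0 < q < 1 -> exists K, 0 < K /\ forall l, Rabs (Cz q z l) <= K.
Proof.
  intros Hq.
  exists (exp (Rabs z / (1 - q)) / exp (- (q / ((1 - q) * (1 - q))))). split.
  { apply Rdiv_lt_0_compat; apply exp_pos. }
  intros l. unfold Cz.
  assert (Hq' : Rabs q < 1) by (rewrite Rabs_pos_eq; lra).
  pose proof (qp_fin_nz q q l Hq Hq').
  rewrite Rabs_div by auto.
  unfold Rdiv. apply Rmult_le_compat.
  - apply Rabs_pos.
  - left; apply Rinv_0_lt_compat. apply Rabs_pos_lt; auto.
  - apply qp_upper'; auto.
  - apply Rinv_le_contravar. apply exp_pos.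
    eapply Rle_trans; [|apply qp_lower; auto].
    apply exp_le_exp. apply Ropp_le_contravar. rewrite Rabs_pos_eq by lra.
    pose proof (pow_lt q l (proj1 Hq)).
    unfold Rdiv. apply Rmult_le_compat_r.
    left; apply Rinv_0_lt_compat; apply Rmult_lt_0_compat; lra. nra.
Qed.

Definition cs q z x l := Cz q z l * x ^ l.

Lemma geom_scal K r : Rabs r < 1 -> is_series (fun l => K * r ^ l) (K / (1 - r)).
Proof.
  intros H. apply (is_series_scal K (fun l => r ^ l)). apply is_series_geom; auto.
Qed.

Lemma cs_ex q z x : 0 < q < 1 -> Rabs x < 1 -> ex_series (cs q z x).
Proof.
  intros Hq Hx. destruct (Cz_bound q z Hq) as [K [HK Hb]].
  apply (@ex_series_le R_AbsRing R_CompleteNormedModule (cs q z x) (fun l => K * Rabs x ^ l)).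
  - intros l. change (norm (cs q z x l)) with (Rabs (cs q z x l)). unfold cs.
    rewrite Rabs_mult, <- RPow_abs. apply Rmult_le_compat_r; auto. apply pow_le, Rabs_pos.
  - eexists. apply geom_scal. rewrite Rabs_Rabsolu; auto.
Qed.

Lemma ser_minus (a b : nat -> R) (la lb : R) : is_series a la -> is_series b lb ->
  is_series (fun n => a n - b n) (la - lb).
Proof. intros; apply (is_series_minus a b); auto. Qed.
Lemma ser_plus (a b : nat -> R) (la lb : R) : is_series a la -> is_series b lb ->
  is_series (fun n => a n + b n) (la + lb).
Proof. intros; apply (is_series_plus a b); auto. Qed.
Lemma ser_scal (c : R) (a : nat -> R) (la : R) : is_series a la -> is_series (fun n => c * a n) (c * la).
Proof. intros; apply (is_series_scal c a); auto. Qed.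
Lemma ser_incr1 (a : nat -> R) (l : R) : is_series a l -> is_series (fun n => a (S n)) (l - a 0%nat).
Proof.
  intros H; apply is_series_incr_1.
  match goal with |- is_series _ ?t => replace t with l; [exact H|] end.
  change (l = l - a 0%nat + a 0%nat). ring.
Qed.

Definition Fq q z x := Series (cs q z x).

Lemma Fq_eq q z x : 0 < q < 1 -> Rabs x < 1 ->
  Fq q z x * (1 - x) = Fq q z (q * x) * (1 - z * x).
Proof.
  intros Hq Hx.
  assert (Hqx : Rabs (q * x) < 1).
  { rewrite Rabs_mult, Rabs_pos_eq by lra. pose proof (Rabs_pos x). nra. }
  pose proof (Series_correct _ (cs_ex q z x Hq Hx)) as HA.
  pose proof (Series_correct _ (cs_ex q z (q * x) Hq Hqx)) as HB.
  fold (Fq q z x) in HA. fold (Fq q z (q * x)) in HB.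
  pose proof HA as HD.
  assert (HD1 : is_series (fun l => cs q z x (S l) - cs q z (q * x) (S l)) (Fq q z x - Fq q z (q * x))).
  { apply (ser_minus _ _ _ _ HA) in HB. pose proof (ser_incr1 _ _ HB) as HD0. clear HD. rename HD0 into HD.
    replace (Fq q z x - Fq q z (q * x)) with (Fq q z x - Fq q z (q * x) - (cs q z x 0 - cs q z (q * x) 0)).
    exact HD. unfold cs, Cz; simpl. field. }
  assert (HE : is_series (fun l => x * (cs q z x l - z * cs q z (q * x) l))
                 (x * (Fq q z x - z * Fq q z (q * x)))).
  { apply ser_scal. apply ser_minus; auto. apply ser_scal; auto. }
  apply (is_series_ext _ (fun l => x * (cs q z x l - z * cs q z (q * x) l))) in HD1.
  - pose proof (is_series_unique _ _ HD1). pose proof (is_series_unique _ _ HE).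
    rewrite H in H0. nra.
  - intros l. unfold cs, Cz. simpl qpoch_fin. rewrite Rpow_mult_distr.
    assert (Rabs q < 1) by (rewrite Rabs_pos_eq; lra).
    pose proof (qp_fin_nz q q l Hq H).
    pose proof (pow_lt_1_compat q (S l) (conj (Rlt_le _ _ (proj1 Hq)) (proj2 Hq)) ltac:(lia)).
    match goal with |- ?a = ?b => change (@eq R a b) end. rewrite !Rpow_mult_distr. simpl pow in *. field. split; auto; lra.
Qed.

Lemma Fq_iter q z x : 0 < q < 1 -> Rabs x < 1 -> forall k,
  Fq q z x * qpoch_fin x q k = Fq q z (q ^ k * x) * qpoch_fin (z * x) q k.
Proof.
  intros Hq Hx k. induction k.
  - simpl. rewrite Rmult_1_l. ring.
  - simpl qpoch_fin. 
    assert (Hw : Rabs (q ^ k * x) < 1).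
    { rewrite Rabs_mult, Rabs_pos_eq by (apply pow_le; lra).
      pose proof (pow_le_1 q k (conj (Rlt_le _ _ (proj1 Hq)) (Rlt_le _ _ (proj2 Hq)))).
      pose proof (Rabs_pos x). pose proof (pow_le q k (Rlt_le _ _ (proj1 Hq))). nra. }
    pose proof (Fq_eq q z (q ^ k * x) Hq Hw) as E.
    replace (q ^ S k * x) with (q * (q ^ k * x)) by (simpl; ring).
    replace (Fq q z x * (qpoch_fin x q k * (1 - x * q ^ k))) with
      ((Fq q z x * qpoch_fin x q k) * (1 - q ^ k * x)) by ring.
    rewrite IHk.
    replace (Fq q z (q ^ k * x) * qpoch_fin (z * x) q k * (1 - q ^ k * x)) with
      ((Fq q z (q ^ k * x) * (1 - q ^ k * x)) * qpoch_fin (z * x) q k) by ring.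
    rewrite E. ring.
Qed.

Lemma Fq_near1 q z : 0 < q < 1 -> exists K, 0 < K /\ forall w, Rabs w < 1 ->
  Rabs (Fq q z w - 1) <= Rabs w * (K / (1 - Rabs w)).
Proof.
  intros Hq. destruct (Cz_bound q z Hq) as [K [HK Hb]]. exists K. split; auto.
  intros w Hw.
  assert (Hex : ex_series (fun l => Rabs (Cz q z (S l) * w ^ l))).
  { apply (@ex_series_le R_AbsRing R_CompleteNormedModule _ (fun l => K * Rabs w ^ l)).
    - intros l. change (norm (Rabs (Cz q z (S l) * w ^ l))) with (Rabs (Rabs (Cz q z (S l) * w ^ l))).
      rewrite Rabs_Rabsolu, Rabs_mult, <- RPow_abs. apply Rmult_le_compat_r; auto. apply pow_le, Rabs_pos.
    - eexists. apply geom_scal. rewrite Rabs_Rabsolu; auto. }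
  pose proof (Series_correct _ (ex_series_Rabs _ Hex)) as HG.
  set (G := Series (fun l => Cz q z (S l) * w ^ l)) in *.
  pose proof (Series_correct _ (cs_ex q z w Hq Hw)) as HF. fold (Fq q z w) in HF.
  apply ser_incr1 in HF.
  apply (ser_scal w) in HG.
  apply (is_series_ext _ (fun l => cs q z w (S l))) in HG.
  2: { intros l. unfold cs. simpl pow. change (w * (Cz q z (S l) * w ^ l) = Cz q z (S l) * (w * w ^ l)). ring. }
  pose proof (is_series_unique _ _ HG). pose proof (is_series_unique _ _ HF).
  rewrite H in H0.
  assert (E : Fq q z w - 1 = w * G).
  { rewrite H0. unfold cs, Cz. simpl. field. }
  rewrite E, Rabs_mult. apply Rmult_le_compat_l. apply Rabs_pos.
  eapply Rle_trans. apply Series_Rabs; auto.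
  rewrite <- (is_series_unique _ _ (geom_scal K (Rabs w) ltac:(rewrite Rabs_Rabsolu; auto))).
  apply Series_le.
  - intros l. split. apply Rabs_pos. rewrite Rabs_mult, <- RPow_abs. apply Rmult_le_compat_r; auto. apply pow_le, Rabs_pos.
  - eexists. apply geom_scal. rewrite Rabs_Rabsolu; auto.
Qed.

Lemma qbin_thm q z x : 0 < q < 1 -> Rabs x < 1 ->
  is_series (fun l => Cz q z l * x ^ l) (qpoch_inf (z * x) q / qpoch_inf x q).
Proof.
  intros Hq Hx.
  replace (qpoch_inf (z * x) q / qpoch_inf x q) with (Fq q z x).
  { apply Series_correct, cs_ex; auto. }
  destruct (Fq_near1 q z Hq) as [K [HK HN]].
  assert (Hw : forall k, Rabs (q ^ k * x) <= q ^ k * Rabs x).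
  { intros k. rewrite Rabs_mult, Rabs_pos_eq by (apply pow_le; lra). lra. }
  assert (Hw1 : forall k, Rabs (q ^ k * x) < 1).
  { intros k. pose proof (Hw k).
    pose proof (pow_le_1 q k (conj (Rlt_le _ _ (proj1 Hq)) (Rlt_le _ _ (proj2 Hq)))).
    pose proof (Rabs_pos x). pose proof (pow_le q k (Rlt_le _ _ (proj1 Hq))). nra. }
  assert (L0 : is_lim_seq (fun k => q ^ k * Rabs x * (K / (1 - Rabs x))) 0).
  { replace 0 with (0 * Rabs x * (K / (1 - Rabs x))) by ring.
    apply is_lim_seq_mult'; [apply is_lim_seq_mult'|]; try apply is_lim_seq_const.
    apply is_lim_seq_geom. rewrite Rabs_pos_eq; lra. }
  assert (LF : is_lim_seq (fun k => Fq q z (q ^ k * x)) 1).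
  { apply (is_lim_seq_le_le (fun k => 1 - q ^ k * Rabs x * (K / (1 - Rabs x)))
                            _ (fun k => 1 + q ^ k * Rabs x * (K / (1 - Rabs x)))).
    - intros k. pose proof (HN _ (Hw1 k)).
      assert (Rabs (q ^ k * x) * (K / (1 - Rabs (q ^ k * x))) <= q ^ k * Rabs x * (K / (1 - Rabs x))).
      { apply Rmult_le_compat; auto. apply Rabs_pos.
        apply Rdiv_le_0_compat; [lra|]. pose proof (Hw1 k); lra.
        unfold Rdiv. apply Rmult_le_compat_l; [lra|]. apply Rinv_le_contravar; [lra|].
        pose proof (Hw k). pose proof (pow_le_1 q k (conj (Rlt_le _ _ (proj1 Hq)) (Rlt_le _ _ (proj2 Hq)))).
        pose proof (Rabs_pos x). nra. }
      pose proof (Rabs_le_between' (Fq q z (q ^ k * x)) 1 (q ^ k * Rabs x * (K / (1 - Rabs x)))).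
      destruct H1 as [H1 _]. apply H1. lra.
    - replace (Finite 1) with (Finite (1 - 0)) by (f_equal; ring).
      apply is_lim_seq_minus'; auto. apply is_lim_seq_const.
    - replace (Finite 1) with (Finite (1 + 0)) by (f_equal; ring).
      apply is_lim_seq_plus'; auto. apply is_lim_seq_const. }
  assert (LL : is_lim_seq (fun k => Fq q z (q ^ k * x) * qpoch_fin (z * x) q k / qpoch_fin x q k)
                          (1 * qpoch_inf (z * x) q / qpoch_inf x q)).
  { apply is_lim_seq_div'. apply is_lim_seq_mult'; auto. apply qp_cv; auto.
    apply qp_cv; auto. apply qp_nz; auto. }
  apply (is_lim_seq_ext _ (fun _ => Fq q z x)) in LL.
  - apply is_lim_seq_unique in LL. rewrite Lim_seq_const in LL. injection LL. intros E.
    unfold Rdiv in E. rewrite Rmult_1_l in E. first [exact E | symmetry; exact E].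
  - intros k. rewrite <- Fq_iter by auto. field. apply qp_fin_nz; auto.
Qed.

Ltac toR := match goal with |- ?a = ?b => change (@eq R a b) end.

Lemma ser_sh (h : nat -> R) x (L : R) : is_series (fun j => x ^ j * h j) L ->
  is_series (fun j => x ^ j * sh h j) (x * L).
Proof.
  intros H. apply is_series_decr_1.
  apply (ser_scal x) in H.
  apply (is_series_ext _ (fun k => x ^ S k * sh h (S k))) in H.
  2: { intros k. simpl. change (x * (x ^ k * h k) = x * x ^ k * h k). ring. }
  match goal with |- is_series _ ?t => replace t with (x * L); [exact H|] end.
  change (x * L = x * L + - (x ^ 0 * sh h 0)). simpl. ring.
Qed.

Lemma ev_S g N x : ev g (S N) x = g 0%nat + x * ev (fun k => g (S k)) N x.
Proof.
  unfold ev. rewrite decomp_sum by lia. simpl pred. rewrite scal_sum.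
  f_equal. simpl; ring. apply sum_eq; intros; simpl; ring.
Qed.

Lemma cauchy_fin (c : nat -> R) x F : is_series (fun l => c l * x ^ l) F ->
  forall N g, (forall k, (N < k)%nat -> g k = 0) ->
  is_series (fun j => x ^ j * conv g c j) (ev g N x * F).
Proof.
  intros HF N. induction N; intros g Hg.
  - apply (is_series_ext (fun j => g 0%nat * (c j * x ^ j))).
    + intros j. toR. rewrite conv_assoc_R.
      assert (Z : forall m, conv (fun k => g (S k)) c m = 0).
      { intros m; unfold conv. rewrite sum_eq with (Bn := fun _ => 0).
        rewrite sum_cte; ring. intros; rewrite Hg by lia; ring. }
      destruct j; simpl sh; [|rewrite Z]; ring.
    + unfold ev. simpl. replace (g 0%nat * 1 * F) with (g 0%nat * F) by ring. apply ser_scal; auto.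
  - pose proof (IHN (fun k => g (S k)) ltac:(intros; apply Hg; lia)) as H.
    apply ser_sh in H.
    apply (is_series_ext (fun j => g 0%nat * (c j * x ^ j) + x ^ j * sh (conv (fun k => g (S k)) c) j)).
    + intros j. toR. rewrite conv_assoc_R. ring.
    + rewrite ev_S. replace ((g 0%nat + x * ev (fun k => g (S k)) N x) * F) with
        (g 0%nat * F + x * (ev (fun k => g (S k)) N x * F)) by ring.
      apply ser_plus; auto. apply ser_scal; auto.
Qed.

Lemma part_ii (a b q : R) (hq0 : 0 < q) (hq1 : q < 1) :
  forall (n : nat) (x : R), Rabs x < 1 -> Rabs x * Rpower q (a + b) < 1 ->
      is_series (fun j => x ^ j * qbinom q (INR j + a + b - 1) j
                          * qnum q (INR j + b) ^ n)
                (En a b q n x / qpochR x q (INR n + a + b)).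
Proof.
  intros n x Hx Hxz.
  assert (Hq : 0 < q < 1) by lra. assert (hq1' : q <> 1) by lra.
  set (z := Rpower q (INR n + a + b)).
  pose proof (qbin_thm q z x Hq Hx) as HQ.
  pose proof (cauchy_fin _ _ _ HQ n (Enk a b q n) (fun k Hk => Enk_zero a b q n k Hk)) as HC.
  assert (Hz : Rabs (x * z) < 1).
  { unfold z. replace (INR n + a + b) with (INR n + (a + b)) by ring.
    rewrite Rpower_plus, Rpower_pow by auto.
    rewrite !Rabs_mult, (Rabs_pos_eq (q ^ n)) by (apply pow_le; lra).
    rewrite (Rabs_pos_eq (Rpower q (a + b))) by (left; apply Rpower_pos).
    pose proof (pow_le_1 q n (conj (Rlt_le _ _ hq0) (Rlt_le _ _ hq1))).
    pose proof (pow_le q n (Rlt_le _ _ hq0)). pose proof (Rabs_pos x).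
    pose proof (Rpower_pos q (a + b)).
    assert (0 <= Rabs x * Rpower q (a + b)) by nra.
    assert ((1 - q ^ n) * (Rabs x * Rpower q (a + b)) >= 0) by nra. nra. }
  eapply is_series_ext; [|replace (En a b q n x / qpochR x q (INR n + a + b)) with
       (ev (Enk a b q n) n x * (qpoch_inf (z * x) q / qpoch_inf x q)); [exact HC|]].
  - intros j. toR. unfold z. rewrite iv_core by auto.
    unfold qbinom, Cz. replace (INR j + a + b - 1 - INR j + 1) with (a + b) by ring. ring.
  - unfold qpochR. fold z. rewrite (Rmult_comm z x).
    pose proof (qp_nz q x Hq Hx). pose proof (qp_nz q (x * z) Hq Hz).
    unfold En. fold (ev (Enk a b q n) n x). field. split; auto.
Qed.

Lemma partial_le (g : nat -> R) (L : R) : (forall j, 0 <= g j) -> is_series g L ->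
  forall N, sum_f_R0 g N <= L.
Proof.
  intros Hg HL N. apply ser_iff in HL.
  apply (is_lim_seq_incr_n _ N) in HL.
  assert (Hm : forall M, sum_f_R0 g N <= sum_f_R0 g (M + N)).
  { induction M. simpl; lra. replace (S M + N)%nat with (S (M + N)) by lia. rewrite tech5. pose proof (Hg (S (M + N))). lra. }
  exact (is_lim_seq_le (fun _ => sum_f_R0 g N) _ _ _ Hm (is_lim_seq_const _) HL).
Qed.

Lemma term_le (g : nat -> R) (L : R) : (forall j, 0 <= g j) -> is_series g L -> forall j, g j <= L.
Proof.
  intros Hg HL j. eapply Rle_trans; [|apply (partial_le g L Hg HL j)].
  destruct j. simpl; lra. rewrite tech5. pose proof (cond_pos_sum g j Hg). lra.
Qed.

Lemma tail_abs (f : nat -> R) N M :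
  Rabs (sum_f_R0 f (M + N) - sum_f_R0 f N) <=
  sum_f_R0 (fun i => Rabs (f i)) (M + N) - sum_f_R0 (fun i => Rabs (f i)) N.
Proof.
  induction M.
  - simpl. rewrite Rminus_diag, Rabs_R0. lra.
  - replace (S M + N)%nat with (S (M + N)) by lia. rewrite !tech5.
    replace (sum_f_R0 f (M + N) + f (S (M + N)) - sum_f_R0 f N) with
      ((sum_f_R0 f (M + N) - sum_f_R0 f N) + f (S (M + N))) by ring.
    eapply Rle_trans; [apply Rabs_triang|]. lra.
Qed.

Lemma finsum_ser (f : nat -> nat -> R) (L : nat -> R) :
  (forall n, is_series (f n) (L n)) ->
  forall N, is_series (fun j => sum_f_R0 (fun n => f n j) N) (sum_f_R0 L N).
Proof.
  intros H N. induction N; simpl; auto.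
  apply ser_plus; auto.
Qed.

Lemma finsum_lim (T : nat -> nat -> R) J :
  (forall j, is_lim_seq (fun N => T N j) 0) ->
  is_lim_seq (fun N => sum_f_R0 (T N) J) 0.
Proof.
  intros H. induction J; simpl; auto.
  replace (Finite 0) with (Finite (0 + 0)) by (f_equal; ring).
  apply is_lim_seq_plus'; auto.
Qed.

Lemma fubini (a : nat -> nat -> R) (Rw Cl B : nat -> R) :
  (forall n, is_series (fun j => a n j) (Rw n)) ->
  (forall j, is_series (fun n => a n j) (Cl j)) ->
  (forall j, is_series (fun n => Rabs (a n j)) (B j)) -> ex_series B ->
  exists S, is_series Rw S /\ is_series Cl S.
Proof.
  intros HR HC HB [SB HSB].
  assert (B0 : forall j, 0 <= B j).
  { intros j. pose proof (partial_le _ _ (fun n => Rabs_pos (a n j)) (HB j) 0). simpl in H.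
    pose proof (Rabs_pos (a 0%nat j)). lra. }
  assert (CB : forall j, Rabs (Cl j) <= B j).
  { intros j. pose proof (HC j) as H1. apply ser_iff in H1. apply is_lim_seq_abs in H1.
    pose proof (HB j) as H2. apply ser_iff in H2.
    apply (is_lim_seq_le _ _ _ _ (fun N => sum_f_R0_triangle (fun n => a n j) N) H1 H2). }
  assert (HexC : ex_series Cl).
  { apply ex_series_Rabs. apply (@ex_series_le R_AbsRing R_CompleteNormedModule _ B).
    intros j. change (Rabs (Rabs (Cl j)) <= B j). rewrite Rabs_Rabsolu; auto.
    exists SB; auto. }
  exists (Series Cl). split; [|apply Series_correct; auto].
  set (S := Series Cl). pose proof (Series_correct _ HexC) as HS. fold S in HS.
  assert (aB : forall n j, Rabs (a n j) <= B j).
  { intros n j. apply (term_le (fun n => Rabs (a n j))); auto. intros; apply Rabs_pos. }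
  assert (HA : forall n, ex_series (fun j => Rabs (a n j))).
  { intros n. apply (@ex_series_le R_AbsRing R_CompleteNormedModule _ B).
    intros j. change (Rabs (Rabs (a n j)) <= B j). rewrite Rabs_Rabsolu; auto.
    exists SB; auto. }
  set (A := fun n => Series (fun j => Rabs (a n j))).
  assert (HA' : forall n, is_series (fun j => Rabs (a n j)) (A n)).
  { intros n; apply Series_correct; auto. }
  set (T := fun N j => B j - sum_f_R0 (fun n => Rabs (a n j)) N).
  set (V := fun N => SB - sum_f_R0 A N).
  assert (HT : forall N, is_series (T N) (V N)).
  { intros N. apply ser_minus; auto. apply (finsum_ser (fun n j => Rabs (a n j))); auto. }
  assert (T0 : forall N j, 0 <= T N j).
  { intros N j. unfold T. pose proof (partial_le _ _ (fun n => Rabs_pos (a n j)) (HB j) N). lra. }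
  assert (V0 : forall N, 0 <= V N).
  { intros N. pose proof (partial_le _ _ (T0 N) (HT N) 0). pose proof (T0 N 0%nat). simpl in H. lra. }
  assert (Key : forall N, Rabs (S - sum_f_R0 Rw N) <= V N).
  { intros N.
    assert (Hr : is_series (fun j => Cl j - sum_f_R0 (fun n => a n j) N) (S - sum_f_R0 Rw N)).
    { apply ser_minus; auto. apply (finsum_ser (fun n j => a n j)); auto. }
    assert (rT : forall j, Rabs (Cl j - sum_f_R0 (fun n => a n j) N) <= T N j).
    { intros j. pose proof (HC j) as H1. apply ser_iff in H1.
      apply (is_lim_seq_incr_n _ N) in H1.
      pose proof (HB j) as H2. apply ser_iff in H2. apply (is_lim_seq_incr_n _ N) in H2.
      assert (H1' := is_lim_seq_minus' _ _ _ _ H1 (is_lim_seq_const (sum_f_R0 (fun n => a n j) N))).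
      apply is_lim_seq_abs in H1'.
      assert (H2' := is_lim_seq_minus' _ _ _ _ H2 (is_lim_seq_const (sum_f_R0 (fun n => Rabs (a n j)) N))).
      apply (is_lim_seq_le _ _ _ _ (fun M => tail_abs (fun n => a n j) N M) H1' H2'). }
    apply ser_iff in Hr. apply is_lim_seq_abs in Hr.
    pose proof (HT N) as H3. apply ser_iff in H3.
    apply (is_lim_seq_le _ _ _ _ (fun J => Rle_trans _ _ _ (sum_f_R0_triangle _ J)
              (sum_Rle _ _ J (fun j _ => rT j))) Hr H3). }
  assert (LV : is_lim_seq V 0).
  { apply is_lim_seq_Reals. intros eps Heps.
    pose proof (HSB) as H1. apply ser_iff, is_lim_seq_Reals in H1.
    destruct (H1 (eps / 2) ltac:(lra)) as [J HJ].
    pose proof (HJ J (le_n J)) as HJ'. unfold Rdist in HJ'.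
    assert (LT : is_lim_seq (fun N => sum_f_R0 (T N) J) 0).
    { apply finsum_lim. intros j. unfold T.
      pose proof (HB j) as H2. apply ser_iff in H2.
      replace (Finite 0) with (Finite (B j - B j)) by (f_equal; ring).
      apply is_lim_seq_minus'; auto. apply is_lim_seq_const. }
    apply is_lim_seq_Reals in LT. destruct (LT (eps / 2) ltac:(lra)) as [N0 HN0].
    exists N0. intros N HN. pose proof (HN0 N HN) as HN'. unfold Rdist in *.
    rewrite Rminus_0_r in *.
    assert (HBT : is_series (fun j => B j - T N j) (SB - V N)) by (apply ser_minus; auto).
    assert (BT0 : forall j, 0 <= B j - T N j).
    { intros j; unfold T. pose proof (partial_le _ _ (fun n => Rabs_pos (a n j)) (HB j) N).
      pose proof (cond_pos_sum (fun n => Rabs (a n j)) N (fun n => Rabs_pos (a n j))). lra. }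
    pose proof (partial_le _ _ BT0 HBT J).
    rewrite minus_sum in H.
    pose proof (V0 N). pose proof (cond_pos_sum (T N) J (T0 N)).
    pose proof (partial_le _ _ B0 HSB J).
    rewrite Rabs_pos_eq in HN' by lra. rewrite Rabs_pos_eq by lra.
    rewrite Rabs_left1 in HJ' by lra. lra. }
  apply ser_iff.
  apply (is_lim_seq_le_le (fun N => S - V N) _ (fun N => S + V N)).
  - intros N. pose proof (Key N). apply Rabs_le_between' in H. lra.
  - replace (Finite S) with (Finite (S - 0)) by (f_equal; ring).
    apply is_lim_seq_minus'; auto. apply is_lim_seq_const.
  - replace (Finite S) with (Finite (S + 0)) by (f_equal; ring).
    apply is_lim_seq_plus'; auto. apply is_lim_seq_const.
Qed.

Lemma exp_ser y : is_series (fun n => y ^ n / INR (fact n)) (exp y).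
Proof.
  apply is_series_Reals. pose proof (proj2_sig (exist_exp y)) as H.
  change (exp y) with (proj1_sig (exist_exp y)).
  intros eps Heps. destruct (H eps Heps) as [N HN]. exists N. intros n Hn.
  rewrite sum_eq with (Bn := fun i => / INR (fact i) * y ^ i). apply HN; auto.
  intros; unfold Rdiv; ring.
Qed.

Lemma part_iii (a b q : R) (hq0 : 0 < q) (hq1 : q < 1) :
  forall x t : R, Rabs x < 1 -> Rabs x * Rpower q (a + b) < 1 ->
      exists S : R,
        is_series (fun n => En a b q n x / qpochR x q (INR n + a + b)
                            * t ^ n / INR (fact n)) S
        /\ is_series (fun j => x ^ j * qbinom q (INR j + a + b - 1) j
                               * exp (qnum q (INR j + b) * t)) S.
Proof.
  intros x t Hx Hxz.
  assert (Hq : 0 < q < 1) by lra.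
  set (c := fun j => x ^ j * qbinom q (INR j + a + b - 1) j).
  set (u := fun j => qnum q (INR j + b)).
  set (f := fun n j => c j * u j ^ n * (t ^ n / INR (fact n))).
  destruct (Cz_bound q (Rpower q (a + b)) Hq) as [K [HK HKb]].
  set (U := (1 + Rpower q b) / (1 - q)).
  assert (HU : forall j, Rabs (u j) <= U).
  { intros j. unfold u, U, qnum. rewrite Rabs_div by lra. rewrite (Rabs_pos_eq (1 - q)) by lra.
    unfold Rdiv. apply Rmult_le_compat_r. left; apply Rinv_0_lt_compat; lra.
    rewrite Rpower_plus, Rpower_pow by lra.
    pose proof (pow_le_1 q j (conj (Rlt_le _ _ hq0) (Rlt_le _ _ hq1))).
    pose proof (pow_le q j (Rlt_le _ _ hq0)). pose proof (Rpower_pos q b).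
    eapply Rle_trans; [apply Rabs_triang|]. rewrite Rabs_R1, Rabs_Ropp, Rabs_mult.
    rewrite !Rabs_pos_eq by lra. nra. }
  assert (Hc : forall j, Rabs (c j) <= K * Rabs x ^ j).
  { intros j. unfold c. rewrite Rabs_mult, <- RPow_abs, Rmult_comm.
    apply Rmult_le_compat_r. apply pow_le, Rabs_pos.
    replace (qbinom q (INR j + a + b - 1) j) with (Cz q (Rpower q (a + b)) j); auto.
    unfold qbinom, Cz. do 3 f_equal. ring. }
  assert (fact_pos : forall n, 0 < INR (fact n)) by (intros; apply lt_0_INR, lt_O_fact).
  destruct (fubini f
     (fun n => En a b q n x / qpochR x q (INR n + a + b) * (t ^ n / INR (fact n)))
     (fun j => c j * exp (u j * t))
     (fun j => Rabs (c j) * exp (Rabs (u j * t)))) as [S [H1 H2]].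
  - intros n. apply (is_series_ext (fun j => (t ^ n / INR (fact n)) *
        (x ^ j * qbinom q (INR j + a + b - 1) j * qnum q (INR j + b) ^ n))).
    + intros j. toR. unfold f, c, u. ring.
    + rewrite Rmult_comm. apply ser_scal. apply part_ii; auto.
  - intros j. apply (is_series_ext (fun n => c j * ((u j * t) ^ n / INR (fact n)))).
    + intros n. toR. unfold f. rewrite Rpow_mult_distr. unfold Rdiv. ring.
    + apply ser_scal, exp_ser.
  - intros j. apply (is_series_ext (fun n => Rabs (c j) * (Rabs (u j * t) ^ n / INR (fact n)))).
    + intros n. toR. unfold f.
      replace (c j * u j ^ n * (t ^ n / INR (fact n))) with (c j * ((u j * t) ^ n / INR (fact n)))
        by (rewrite Rpow_mult_distr; unfold Rdiv; ring).
      rewrite (Rabs_mult (c j)), Rabs_div, <- RPow_abs.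
      rewrite (Rabs_pos_eq (INR (fact n))) by (left; auto). reflexivity.
      apply Rgt_not_eq, fact_pos.
    + apply ser_scal, exp_ser.
  - apply (@ex_series_le R_AbsRing R_CompleteNormedModule _ (fun j => (K * exp (U * Rabs t)) * Rabs x ^ j)).
    + intros j. change (Rabs (Rabs (c j) * exp (Rabs (u j * t))) <= K * exp (U * Rabs t) * Rabs x ^ j).
      rewrite Rabs_mult, Rabs_Rabsolu, (Rabs_pos_eq (exp _)) by (left; apply exp_pos).
      replace (K * exp (U * Rabs t) * Rabs x ^ j) with ((K * Rabs x ^ j) * exp (U * Rabs t)) by ring.
      apply Rmult_le_compat; auto. apply Rabs_pos. left; apply exp_pos.
      apply exp_le_exp. rewrite Rabs_mult. apply Rmult_le_compat_r; auto. apply Rabs_pos.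
    + eexists. apply geom_scal. rewrite Rabs_Rabsolu; auto.
  - exists S. split.
    + eapply is_series_ext; [|exact H1]. intros n. toR. unfold Rdiv. ring.
    + eapply is_series_ext; [|exact H2]. intros j. toR. reflexivity.
Qed.

Theorem theorem1p2 (alpha beta q : R) (hq0 : 0 < q) (hq1 : q <> 1) :
  (* (i) *)
  (forall (n : nat) (x : R), (1 <= n)%nat -> x <> 0 ->
     En alpha beta q n x =
       (qnum q beta + Rpower q beta * qnum q (INR n - 1 + alpha) * x)
         * En alpha beta q (n - 1) x
       + (1 - x) * x * Rpower q beta * qderiv q (En alpha beta q (n - 1)) x)
  /\
  (* (iv) *)
  (forall n j : nat,
     sum_f_R0 (fun k => qbinom q (INR j - INR k + INR n + alpha + beta - 1) (j - k)
                        * Enk alpha beta q n k) j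
     = qbinom q (INR j + alpha + beta - 1) j * qnum q (INR j + beta) ^ n)
  /\
  (* (v) *)
  (forall n k : nat, (k <= n)%nat ->
     Enk alpha beta q n k =
     sum_f_R0 (fun j => qbinom q (INR n + alpha + beta) (k - j)
                        * qbinom q (INR j + alpha + beta - 1) j
                        * (-1) ^ (k - j) * q ^ (Nat.div ((k - j) * (k - j - 1)) 2)
                        * qnum q (beta + INR j) ^ n) k)
  /\
  (q < 1 ->
   (* (ii) *)
   (forall (n : nat) (x : R), Rabs x < 1 -> Rabs x * Rpower q (alpha + beta) < 1 ->
      is_series (fun j => x ^ j * qbinom q (INR j + alpha + beta - 1) j
                          * qnum q (INR j + beta) ^ n)
                (En alpha beta q n x / qpochR x q (INR n + alpha + beta)))
   /\
   (* (iii) *)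
   (forall x t : R, Rabs x < 1 -> Rabs x * Rpower q (alpha + beta) < 1 ->
      exists S : R,
        is_series (fun n => En alpha beta q n x / qpochR x q (INR n + alpha + beta)
                            * t ^ n / INR (fact n)) S
        /\ is_series (fun j => x ^ j * qbinom q (INR j + alpha + beta - 1) j
                               * exp (qnum q (INR j + beta) * t)) S)).
Proof.
  split; [apply part_i; auto|].
  split; [apply part_iv; auto|].
  split; [apply part_v; auto|].
  intros hq. split; [apply part_ii; auto | apply part_iii; auto].
Qed.
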